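(* Let $A,B\in\mathbb{T}^{k\times n}$ be such that $A\odot B^T$ is symmetric. Then any two rows of the $k\times 2n$ matrix $(A|B)$ are (tropically) orthogonal.
   Context: $\mathbb{T}=\mathbb{R}\cup\{\infty\}$ with $a\oplus b=\min(a,b)$, $a\odot b=a+b$. $(A\odot B^T)_{ij}=\min_{l\in[n]}(A_{il}+B_{jl})$. The columns of $(A|B)$ are indexed by $[2n]=\{1,\dots,n,\bar1,\dots,\bar n\}$ (columns of $A$ by $1,\dots,n$, of $B$ by $\bar1,\dots,\bar n$), with $\bar{\bar i}=i$. Two vectors $x,y\in\mathbb{T}^{2n}$ are orthogonal if $\min_{l\in[2n]}(x_l+y_{\bar l})$ is attained at least twice. *)

(* Defs.v *)
From HB Require Import structures.
From mathcomp Require Import all_boot all_order all_algebra.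
Set Implicit Arguments. Unset Strict Implicit. Unset Printing Implicit Defensive.
Import Order.TTheory GRing.Theory Num.Theory.
Local Open Scope ring_scope.

(* Tropical semiring T = R ∪ {∞}: [Some a] is the real a, [None] is ∞. *)
Definition trop (R : realFieldType) := option R.

Definition tadd (R : realFieldType) (x y : trop R) : trop R :=
  match x, y with
  | None, _ => y
  | _, None => x
  | Some a, Some b => Some (Num.min a b)
  end.

Definition tmul (R : realFieldType) (x y : trop R) : trop R :=
  match x, y with
  | Some a, Some b => Some (a + b)
  | _, _ => None
  end.

Definition tmul_trT (R : realFieldType) (k n : nat)
  (A B : 'M[trop R]_(k, n)) : 'M[trop R]_(k, k) :=
  \matrix_(i < k, j < k) \big[@tadd R/None]_(l < n) tmul (A i l) (B j l).

(* index set [2n] = {1..n} ∪ {bar 1 .. bar n}: inl l = l, inr l = bar l *)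
Definition idx2 (n : nat) := ('I_n + 'I_n)%type.

Definition bar (n : nat) (l : idx2 n) : idx2 n :=
  match l with inl i => inr i | inr i => inl i end.

Definition rowAB (R : realFieldType) (k n : nat)
  (A B : 'M[trop R]_(k, n)) (i : 'I_k) : idx2 n -> trop R :=
  fun l => match l with inl m => A i m | inr m => B i m end.

Definition trop_orthogonal (R : realFieldType) (n : nat)
  (x y : idx2 n -> trop R) : Prop :=
  let f := fun l => tmul (x l) (y (bar l)) in
  let m := \big[@tadd R/None]_(l : idx2 n) f l in
  exists l1 l2 : idx2 n, l1 <> l2 /\ f l1 = m /\ f l2 = m.

(* Main.v *)
Require Import Defs.
From HB Require Import structures.
From mathcomp Require Import all_boot all_order all_algebra.
Local Open Scope ring_scope.
Import Order.TTheory GRing.Theory Num.Theory.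

Definition tle {R : realFieldType} (x y : trop R) : bool :=
  match x, y with
  | _, None => true
  | None, Some _ => false
  | Some a, Some b => (a <= b)%R
  end.

Lemma tle_trans {R : realFieldType} (x y z : trop R) :
  tle x y -> tle y z -> tle x z.
Proof.
case: x => [a|]; case: y => [b|]; case: z => [c|] //=; exact: le_trans.
Qed.

Lemma tle_anti {R : realFieldType} (x y : trop R) :
  tle x y -> tle y x -> x = y.
Proof.
case: x => [a|]; case: y => [b|] //= h1 h2; congr Some; apply/eqP.
by rewrite eq_le h1 h2.
Qed.

Lemma tadd_lel {R : realFieldType} (x y : trop R) : tle (tadd x y) x.
Proof. case: x => [a|]; case: y => [b|] //=; by rewrite ?ge_min ?lexx ?lexx. Qed.

Lemma tadd_ler {R : realFieldType} (x y : trop R) : tle (tadd x y) y.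
Proof. case: x => [a|]; case: y => [b|] //=; by rewrite ?ge_min ?lexx ?lexx orbT. Qed.

Lemma tadd_eq {R : realFieldType} (x y : trop R) : tadd x y = x \/ tadd x y = y.
Proof.
case: x => [a|]; case: y => [b|] /=; auto.
rewrite /Num.min; case: ifP; auto.
Qed.

Lemma tmulC {R : realFieldType} (x y : trop R) : tmul x y = tmul y x.
Proof. by case: x => [a|]; case: y => [b|] //=; rewrite addrC. Qed.

Lemma big_tle {R : realFieldType} {I : eqType} (r : seq I) (F : I -> trop R) x :
  x \in r -> tle (\big[@tadd R/None]_(l <- r) F l) (F x).
Proof.
elim: r => [|a r IH] //; rewrite in_cons big_cons => /orP [/eqP ->|h].
  exact: tadd_lel.
exact: tle_trans (tadd_ler _ _) (IH h).
Qed.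

Lemma big_att {R : realFieldType} {I : eqType} (r : seq I) (F : I -> trop R) :
  r <> [::] -> exists2 x, x \in r & \big[@tadd R/None]_(l <- r) F l = F x.
Proof.
elim: r => [|a r IH] // _; rewrite big_cons.
case: r IH => [|b r] IH.
  exists a; first by rewrite mem_head.
  by rewrite big_nil; case: (F a).
have [x xin ->] := IH ltac:(by []).
case: (tadd_eq (F a) (F x)) => ->.
  by exists a; rewrite ?mem_head.
by exists x; rewrite // in_cons xin orbT.
Qed.

Lemma big_att_fin {R : realFieldType} {I : finType} (F : I -> trop R) (i0 : I) :
  exists x, \big[@tadd R/None]_(l : I) F l = F x.
Proof.
have : index_enum I <> [::].
  by move=> h; have := mem_index_enum i0; rewrite h.
by move/(@big_att _ _ _ F) => [x _ ->]; exists x.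
Qed.

Lemma big_tle_fin {R : realFieldType} {I : finType} (F : I -> trop R) x :
  tle (\big[@tadd R/None]_(l : I) F l) (F x).
Proof. by apply: big_tle; rewrite mem_index_enum. Qed.

Theorem proposition4p15 (R : realFieldType) (k n : nat) (hn : (0 < n)%N)
  (A B : 'M[trop R]_(k, n)) :
  (tmul_trT A B)^T = tmul_trT A B ->
  forall i j : 'I_k, i <> j -> trop_orthogonal (rowAB A B i) (rowAB A B j).
Proof.
move=> hsym i j _.
have hM : tmul_trT A B j i = tmul_trT A B i j.
  by have := congr1 (fun M : 'M[trop R]_k => M i j) hsym; rewrite /= mxE.
rewrite /tmul_trT !mxE in hM.
set M := \big[@tadd R/None]_(l < n) tmul (A i l) (B j l) in hM.
have i0 : 'I_n := Ordinal hn.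
have [m0 hm0] := big_att_fin (fun l => tmul (A i l) (B j l)) i0.
have [m1 hm1] := big_att_fin (fun l => tmul (A j l) (B i l)) i0.
rewrite /trop_orthogonal /=.
set f := fun l : idx2 n => tmul (rowAB A B i l) (rowAB A B j (bar l)).
have hl : forall m, tle M (f (inl m)).
  by move=> m; rewrite /f /=; apply: (big_tle_fin (fun l => tmul (A i l) (B j l))).
have hr : forall m, tle M (f (inr m)).
  move=> m; rewrite /f /= -hM.
  by rewrite tmulC; apply: (big_tle_fin (fun l => tmul (A j l) (B i l))).
have e0 : f (inl m0) = M by rewrite /f /= /M hm0.
have e1 : f (inr m1) = M.
  by rewrite /f /= -hM hm1 /= tmulC.
have [ls hls] := big_att_fin f (inl m0).
have htot : \big[@tadd R/None]_(l : idx2 n) f l = M.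
  apply: tle_anti.
    by rewrite -e0; apply: big_tle_fin.
  by rewrite hls; case: ls {hls} => m; [apply: hl | apply: hr].
exists (inl m0), (inr m1); split=> //.
by rewrite htot.
Qed.
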